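(* The group of units of a cancellative strongly hyperbolic monoid is a (word) hyperbolic group.
   Context: Directed graphs may have loops and multiple edges; $d(u,v)$ is the length of a shortest directed path from $u$ to $v$ ($\infty$ if none). Out-ball $\overrightarrow{\mathcal{B}}_r(x)=\{y : d(x,y)\le r\}$, in-ball $\overleftarrow{\mathcal{B}}_r(x)=\{y : d(y,x)\le r\}$, extended to sets by union. A path $[x_0,\dots,x_n]$ is a geodesic if $n=d(x_0,x_n)$. A directed geodesic triangle is an ordered triple $(p,q,r)$ of geodesics with the end of $p$ equal to the start of $q$ and $p\circ q$ having the same start and end as $r$; it is $\delta$-thin if every vertex of $r$ lies in $\overrightarrow{\mathcal{B}}_\delta(p)\cup\overleftarrow{\mathcal{B}}_\delta(q)$, every vertex of $p$ lies in $\overrightarrow{\mathcal{B}}_\delta(r)\cup\overleftarrow{\mathcal{B}}_\delta(q)$, and every vertex of $q$ lies in $\overrightarrow{\mathcal{B}}_\delta(p)\cup\overleftarrow{\mathcal{B}}_\delta(r)$. A directed graph is strongly $\delta$-hyperbolic if all its directed geodesic triangles are $\delta$-thin. A monoid is strongly hyperbolic if its right Cayley graph (vertex set the monoid, edge $m\to n$ for each generator $a$ with $ma=n$) w.r.t. some finite generating set is strongly $\delta$-hyperbolic for some $\delta\ge0$. The group of units is the set of $x$ for which some $y$ satisfies $xy=yx=1$. *)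

(* Defs.v *)
From Stdlib Require Import List Arith.
Import ListNotations.
Set Implicit Arguments.

(* ---------- Directed graphs (vertex type V, edge relation E) ----------
   Multiple edges do not affect distances, paths-as-vertex-sequences,
   geodesics or thinness, so a graph is represented by its edge relation. *)
Section Graphs.
Variables (V : Type) (E : V -> V -> Prop).

(* the path [x; p_1; ...; p_n] is represented by its start x and tail p;
   its length is length p and it ends at last p x *)
Fixpoint is_path (x : V) (p : list V) : Prop :=
  match p with
  | [] => True
  | y :: p' => E x y /\ is_path y p'
  end.

Definition path_end (x : V) (p : list V) : V := last p x.

Definition walk (x y : V) (n : nat) : Prop :=
  exists p, length p = n /\ is_path x p /\ path_end x p = y.

Definition dist_le (x y : V) (r : nat) : Prop :=
  exists n, n <= r /\ walk x y n.

Definition geodesic (x : V) (p : list V) : Prop :=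
  is_path x p /\ forall n, walk x (path_end x p) n -> length p <= n.

Definition in_out_ball (d : nat) (x : V) (p : list V) (y : V) : Prop :=
  exists s, In s (x :: p) /\ dist_le s y d.

Definition in_in_ball (d : nat) (x : V) (p : list V) (y : V) : Prop :=
  exists s, In s (x :: p) /\ dist_le y s d.

Definition geodesic_triangle (xp : V) (p : list V) (xq : V) (q : list V)
    (xr : V) (r : list V) : Prop :=
  geodesic xp p /\ geodesic xq q /\ geodesic xr r /\
  path_end xp p = xq /\ xr = xp /\ path_end xr r = path_end xq q.

Definition thin_triangle (d : nat) (xp : V) (p : list V) (xq : V) (q : list V)
    (xr : V) (r : list V) : Prop :=
  (forall v, In v (xr :: r) -> in_out_ball d xp p v \/ in_in_ball d xq q v) /\
  (forall v, In v (xp :: p) -> in_out_ball d xr r v \/ in_in_ball d xq q v) /\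
  (forall v, In v (xq :: q) -> in_out_ball d xp p v \/ in_in_ball d xr r v).

Definition strongly_hyperbolic_graph_delta (d : nat) : Prop :=
  forall xp p xq q xr r, geodesic_triangle xp p xq q xr r ->
    thin_triangle d xp p xq q xr r.

(* distances are integers, so a real delta >= 0 may be taken in nat *)
Definition strongly_hyperbolic_graph : Prop :=
  exists d : nat, strongly_hyperbolic_graph_delta d.

End Graphs.

Section Monoids.
Variables (M : Type) (mul : M -> M -> M) (one : M).

Definition is_monoid : Prop :=
  (forall x y z, mul x (mul y z) = mul (mul x y) z) /\
  (forall x, mul one x = x) /\ (forall x, mul x one = x).

Definition cancellative : Prop :=
  (forall a x y, mul a x = mul a y -> x = y) /\
  (forall a x y, mul x a = mul y a -> x = y).

Definition word_prod (l : list M) : M := fold_right mul one l.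

Definition generates (gens : list M) : Prop :=
  forall m, exists l, (forall a, In a l -> In a gens) /\ m = word_prod l.

Definition cayley_edge (gens : list M) (m n : M) : Prop :=
  exists a, In a gens /\ mul m a = n.

Definition strongly_hyperbolic_monoid : Prop :=
  exists gens : list M, generates gens /\
    strongly_hyperbolic_graph (cayley_edge gens).

Definition is_unit (x : M) : Prop := exists y, mul x y = one /\ mul y x = one.

Definition units : Type := { x : M | is_unit x }.

Definition units_cayley_edge (S : list M) (u v : units) : Prop :=
  exists s, In s S /\ mul (proj1_sig u) s = proj1_sig v.

(* The group of units is word hyperbolic: it has a finite symmetric
   generating set S whose Cayley graph (a symmetric directed graph, i.e. the
   undirected Cayley graph) has uniformly thin geodesic triangles. *)
Definition units_word_hyperbolic : Prop :=
  exists S : list M,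
    (forall s, In s S -> is_unit s) /\
    (forall s, In s S -> exists t, In t S /\ mul s t = one /\ mul t s = one) /\
    (forall u : units, exists l, (forall a, In a l -> In a S) /\
                                 proj1_sig u = word_prod l) /\
    strongly_hyperbolic_graph (units_cayley_edge S).

End Monoids.

(* Main.v *)
Require Import Defs.
From Stdlib Require Import List Arith Lia Classical.
Import ListNotations.
#[local] Arguments path_end : simpl never.

Lemma min_nat (P : nat -> Prop) : (exists n, P n) -> exists n, P n /\ forall m, P m -> n <= m.
Proof.
  intros [n Hn].
  destruct (classic (exists n, P n /\ forall m, P m -> n <= m)) as [H|H]; auto.
  exfalso.
  assert (forall k, forall j, j <= k -> ~ P j).
  { induction k as [|k IH]; intros j Hj Pj.
    - apply H. exists j. split; auto. intros. lia.
    - apply H. exists j. split; auto. intros m Pm.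
      destruct (le_lt_dec j m); auto. exfalso. apply (IH m); [lia|auto]. }
  apply (H0 n n); auto.
Qed.

Section G.
Variables (V : Type) (E : V -> V -> Prop).
Implicit Types (x y z u : V) (p q : list V).

Lemma path_end_cons x y p : path_end x (y :: p) = path_end y p.
Proof.
  unfold path_end. revert x y. induction p as [|z p IH]; intros x y; simpl; auto.
  destruct p as [|w p]; auto. simpl in *. rewrite (IH x z). symmetry. apply (IH y z).
Qed.

Lemma path_end_app x p q : path_end x (p ++ q) = path_end (path_end x p) q.
Proof.
  revert x. induction p as [|y p IH]; intros x; auto.
  rewrite <- app_comm_cons, !path_end_cons. apply IH.
Qed.

Lemma is_path_app x p q : is_path E x (p ++ q) <-> is_path E x p /\ is_path E (path_end x p) q.
Proof.
  revert x. induction p as [|y p IH]; intros x; simpl.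
  - unfold path_end. simpl. tauto.
  - rewrite path_end_cons. rewrite IH. tauto.
Qed.



End G.
Lemma in_end {V : Type} (x : V) (p : list V) : In (path_end x p) (x :: p).
Proof.
  revert x. induction p as [|y p IH]; intros x; simpl; auto.
  rewrite path_end_cons. specialize (IH y). simpl in IH. tauto.
Qed.
Section G2.
Variables (V : Type) (E : V -> V -> Prop).
Implicit Types (x y z u : V) (p q : list V).
Lemma in_app_split x p q u : In u (x :: p ++ q) -> In u (x :: p) \/ In u (path_end x p :: q).
Proof.
  intros H. simpl in H. destruct H as [H|H]; [left; simpl; auto|].
  apply in_app_or in H. destruct H as [H|H]; [left; simpl; auto|].
  right; simpl; auto.
Qed.

Lemma in_app_l x p q u : In u (x :: p) -> In u (x :: p ++ q).
Proof. simpl. intros [H|H]; auto. right. apply in_or_app; auto. Qed.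

Lemma in_app_r x p q u : In u (path_end x p :: q) -> In u (x :: p ++ q).
Proof.
  intros [H|H].
  - subst. apply in_app_l. apply in_end.
  - simpl. right. apply in_or_app; auto.
Qed.

Lemma in_decomp x p u : In u (x :: p) -> exists p1 p2, p = p1 ++ p2 /\ path_end x p1 = u.
Proof.
  intros [H|H].
  - exists [], p. auto.
  - apply in_split in H. destruct H as [l1 [l2 H]].
    exists (l1 ++ [u]), l2. split. rewrite H, <- app_assoc. auto.
    rewrite path_end_app. auto.
Qed.

Lemma walk_trans x y z n m : walk E x y n -> walk E y z m -> walk E x z (n + m).
Proof.
  intros [p [Hl [Hp He]]] [q [Hl' [Hq He']]].
  exists (p ++ q). rewrite length_app, is_path_app, path_end_app. subst. auto.
Qed.

Lemma walk_refl x : walk E x x 0.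
Proof. exists []. simpl. auto. Qed.

Lemma dist_le_refl x n : dist_le E x x n.
Proof. exists 0. split. lia. apply walk_refl. Qed.

Lemma dist_le_mono x y n m : dist_le E x y n -> n <= m -> dist_le E x y m.
Proof. intros [k [Hk W]] Hm. exists k. split; auto. lia. Qed.

Lemma dist_le_trans x y z n m : dist_le E x y n -> dist_le E y z m -> dist_le E x z (n + m).
Proof.
  intros [k [Hk W]] [k' [Hk' W']]. exists (k + k'). split. lia. eapply walk_trans; eauto.
Qed.

Lemma dist_le_edge x y : E x y -> dist_le E x y 1.
Proof. intros H. exists 1. split; auto. exists [y]. simpl. auto. Qed.

Lemma walk_dist x y n : walk E x y n -> dist_le E x y n.
Proof. intros. exists n. auto. Qed.

Lemma path_walk x p : is_path E x p -> walk E x (path_end x p) (length p).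
Proof. intros. exists p. auto. Qed.

Lemma prefix_dist x p u : is_path E x p -> In u (x :: p) -> dist_le E x u (length p).
Proof.
  intros Hp Hu. destruct (in_decomp x p u Hu) as [p1 [p2 [-> He]]].
  apply is_path_app in Hp. exists (length p1). rewrite length_app. split. lia.
  exists p1. tauto.
Qed.

Lemma suffix_dist x p u : is_path E x p -> In u (x :: p) -> dist_le E u (path_end x p) (length p).
Proof.
  intros Hp Hu. destruct (in_decomp x p u Hu) as [p1 [p2 [-> He]]].
  apply is_path_app in Hp. exists (length p2). rewrite length_app. split. lia.
  exists p2. rewrite path_end_app, He. subst. tauto.
Qed.

Lemma geodesic_exists x y n : walk E x y n -> exists r, geodesic E x r /\ path_end x r = y.
Proof.
  intros W. destruct (min_nat (walk E x y) (ex_intro _ n W)) as [m [[r [Hl [Hp He]]] Hmin]].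
  exists r. split; auto. split; auto. intros k Wk. rewrite He in Wk. rewrite Hl. auto.
Qed.

Lemma geodesic_lb x (p1 p2 p3 : list V) n : geodesic E x (p1 ++ p2 ++ p3) ->
  walk E (path_end x p1) (path_end x (p1 ++ p2)) n -> length p2 <= n.
Proof.
  intros [Hp Hg] W.
  assert (W1 : walk E x (path_end x p1) (length p1)).
  { apply is_path_app in Hp. exists p1. tauto. }
  assert (W3 : walk E (path_end x (p1 ++ p2)) (path_end x (p1 ++ p2 ++ p3)) (length p3)).
  { rewrite app_assoc in Hp |- *. apply is_path_app in Hp. exists p3. rewrite (path_end_app _ x (p1++p2) p3). tauto. }
  pose proof (Hg _ (walk_trans _ _ _ _ _ (walk_trans _ _ _ _ _ W1 W) W3)).
  rewrite !length_app in H. lia.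
Qed.

Lemma geodesic_sub x (p1 p2 p3 : list V) : geodesic E x (p1 ++ p2 ++ p3) -> geodesic E (path_end x p1) p2.
Proof.
  intros G. split.
  - destruct G as [Hp _]. apply is_path_app in Hp. destruct Hp as [_ Hp].
    apply is_path_app in Hp. tauto.
  - intros n W. eapply geodesic_lb; eauto. rewrite path_end_app. auto.
Qed.

Lemma geodesic_nil x : geodesic E x [].
Proof. split. simpl; auto. intros; simpl; lia. Qed.

Hypothesis Esym : forall a b, E a b -> E b a.

Lemma rev_path x p : is_path E x p -> exists q, length q = length p /\ is_path E (path_end x p) q /\
  path_end (path_end x p) q = x /\ (forall u, In u (path_end x p :: q) -> In u (x :: p)).
Proof.
  revert x. induction p as [|y p IH]; intros x Hp.
  - exists []. simpl. unfold path_end; simpl. auto.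
  - simpl in Hp. destruct Hp as [Hxy Hp]. destruct (IH y Hp) as [q [Hl [Hq [He Hin]]]].
    exists (q ++ [x]). rewrite path_end_cons. split. rewrite length_app; simpl; lia.
    split. apply is_path_app. split; auto. rewrite He. simpl. auto.
    split. rewrite path_end_app, He. auto.
    intros u Hu. apply in_app_split in Hu. destruct Hu as [Hu|Hu].
    + apply Hin in Hu. simpl in Hu |- *. tauto.
    + rewrite He in Hu. simpl in Hu |- *. tauto.
Qed.

Lemma dist_sym x y n : dist_le E x y n -> dist_le E y x n.
Proof.
  intros [k [Hk [p [Hl [Hp He]]]]]. destruct (rev_path x p Hp) as [q [Hq [Hq' [He' _]]]].
  exists k. split; auto. exists q. subst. auto.
Qed.

End G2.
Arguments in_decomp {V} x p u.
Arguments in_app_split {V} x p q u.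
Arguments in_app_l {V} x p q u.
Arguments in_app_r {V} x p q u.
Arguments path_end_app {V} x p q.
Arguments path_end_cons {V} x y p.

Section Core.
Variables (V : Type) (EA ES : V -> V -> Prop) (U : V -> Prop) (d K : nat).
Implicit Types (x y z u v w : V) (p q c r : list V).
Hypothesis Hthin : strongly_hyperbolic_graph_delta EA d.
Hypothesis HAS : forall x y, EA x y -> U y -> ES x y /\ U x.
Hypothesis HUS : forall x y, ES x y -> U x -> U y.
Hypothesis Hsym : forall x y, ES x y -> ES y x.
Hypothesis HK : 1 <= K.
Hypothesis Hexp : forall x y, ES x y -> U x -> exists c, is_path EA x c /\ path_end x c = y /\
  length c <= K /\ forall u, In u (x :: c) -> dist_le ES x u K.

Notation dS := (dist_le ES).
Notation dA := (dist_le EA).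

Lemma pe_single x y : path_end x [y] = y.
Proof. reflexivity. Qed.

Lemma path_U x p : is_path EA x p -> U (path_end x p) -> forall u, In u (x :: p) -> U u.
Proof.
  revert x. induction p as [|y p IH]; intros x Hp He u Hu.
  - destruct Hu as [Hu|[]]. subst. exact He.
  - destruct Hp as [Hxy Hp]. rewrite path_end_cons in He.
    assert (Hy : forall u, In u (y :: p) -> U u) by (apply IH; auto).
    destruct Hu as [Hu|Hu].
    + subst. exact (proj2 (HAS _ _ Hxy (Hy y (or_introl eq_refl)))).
    + apply Hy. exact Hu.
Qed.

Lemma pathA_S x p : is_path EA x p -> U (path_end x p) -> is_path ES x p.
Proof.
  revert x. induction p as [|y p IH]; intros x Hp He; simpl; auto.
  destruct Hp as [Hxy Hp]. rewrite path_end_cons in He. split; auto.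
  exact (proj1 (HAS _ _ Hxy (path_U y p Hp He y (or_introl eq_refl)))).
Qed.

Lemma dA_dS x y n : dA x y n -> U y -> dS x y n.
Proof.
  intros [k [Hk [p [Hl [Hp He]]]]] Hy. exists k. split; auto. exists p.
  subst. split; auto. split; auto. apply pathA_S; auto.
Qed.

Lemma path_US x p : is_path ES x p -> U x -> forall u, In u (x :: p) -> U u.
Proof.
  revert x. induction p as [|y p IH]; intros x Hp Hx u Hu.
  - destruct Hu as [Hu|[]]. subst. auto.
  - destruct Hp as [Hxy Hp]. destruct Hu as [Hu|Hu]. subst; auto.
    apply (IH y Hp (HUS _ _ Hxy Hx)). auto.
Qed.

Lemma dS_U x y n : dS x y n -> U x -> U y.
Proof.
  intros [k [Hk [p [Hl [Hp He]]]]] Hx. subst. apply (path_US x p Hp Hx). apply in_end.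
Qed.

Lemma dS_sym x y n : dS x y n -> dS y x n.
Proof. apply dist_sym. exact Hsym. Qed.

Lemma dS_U' x y n : dS x y n -> U y -> U x.
Proof. intros H Hy. apply (dS_U y x n); auto. apply dS_sym; auto. Qed.

Lemma expand x W : is_path ES x W -> U x -> exists c, is_path EA x c /\
  path_end x c = path_end x W /\ length c <= K * length W /\
  forall u, In u (x :: c) -> exists w, In w (x :: W) /\ dS w u K.
Proof.
  revert x. induction W as [|y W IH]; intros x HW Hx.
  - exists []. simpl. repeat split; auto. lia. intros u [Hu|[]]. subst. exists u. split. left; auto.
    apply dist_le_refl.
  - destruct HW as [Hxy HW]. destruct (Hexp x y Hxy Hx) as [c1 [Hc1 [He1 [Hl1 Hin1]]]].
    destruct (IH y HW (HUS _ _ Hxy Hx)) as [c2 [Hc2 [He2 [Hl2 Hin2]]]].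
    exists (c1 ++ c2). split. apply is_path_app. rewrite He1. auto.
    split. rewrite path_end_app, He1, He2, path_end_cons. auto.
    split. rewrite length_app. simpl. nia.
    intros u Hu. apply in_app_split in Hu. destruct Hu as [Hu|Hu].
    + exists x. split. left; auto. auto.
    + rewrite He1 in Hu. destruct (Hin2 u Hu) as [w [Hw Hd]]. exists w. split; auto.
      right; auto.
Qed.

Lemma dS_dA x y n : dS x y n -> U x -> dA x y (K * n).
Proof.
  intros [k [Hk [p [Hl [Hp He]]]]] Hx. destruct (expand x p Hp Hx) as [c [Hc [He' [Hl' _]]]].
  exists (length c). split. subst. nia. exists c. subst. auto.
Qed.

Lemma log_lemma k : forall x c r, is_path EA x c -> U (path_end x c) -> length c <= 2 ^ k ->
  geodesic EA x r -> path_end x r = path_end x c ->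
  forall v, In v (x :: r) -> exists w, In w (x :: c) /\ dS v w (d * k).
Proof.
  induction k as [|k IH]; intros x c r Hc HU Hl Hr Her v Hv.
  - assert (Hlr : length r <= length c).
    { destruct Hr as [_ Hg]. apply Hg. rewrite Her. apply path_walk; auto. }
    simpl in Hl. destruct r as [|z [|z' r]]; simpl in Hlr; try lia.
    + destruct Hv as [Hv|[]]. subst. exists v. split. left; auto. apply dist_le_refl.
    + destruct Hv as [Hv|[Hv|[]]]; subst.
      * exists v. split. left; auto. apply dist_le_refl.
      * exists v. split. rewrite pe_single in Her. rewrite Her. apply in_end. apply dist_le_refl.
  - pose proof (firstn_skipn (2 ^ k) c) as Hsplit.
    set (c1 := firstn (2 ^ k) c) in *. set (c2 := skipn (2 ^ k) c) in *.
    assert (Hc' : is_path EA x (c1 ++ c2)) by (rewrite Hsplit; auto).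
    apply is_path_app in Hc'. destruct Hc' as [Hc1 Hc2].
    set (m := path_end x c1) in *.
    assert (HUc : forall u, In u (x :: c) -> U u) by (apply path_U; auto).
    assert (Hm : U m).
    { apply HUc. rewrite <- Hsplit. apply in_app_l. apply in_end. }
    assert (Hend : path_end m c2 = path_end x c) by (rewrite <- Hsplit, path_end_app; auto).
    destruct (geodesic_exists _ EA x m _ (path_walk _ EA x c1 Hc1)) as [p [Hp Hpe]].
    destruct (geodesic_exists _ EA m (path_end m c2) _ (path_walk _ EA m c2 Hc2)) as [q [Hq Hqe]].
    assert (Htri : geodesic_triangle EA x p m q x r).
    { unfold geodesic_triangle. repeat split; auto; try apply Hp; try apply Hq; try apply Hr.
      all: rewrite Her, Hqe, Hend; auto. }
    destruct (Hthin _ _ _ _ _ _ Htri) as [T1 _].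
    assert (HUv : U v).
    { apply (path_U x r); auto. apply Hr. rewrite Her. auto. }
    assert (Hl1 : length c1 <= 2 ^ k).
    { unfold c1. rewrite firstn_length. lia. }
    assert (Hl2 : length c2 <= 2 ^ k).
    { unfold c2. rewrite length_skipn. simpl in Hl. lia. }
    destruct (T1 v Hv) as [[s [Hs Hd]]|[s [Hs Hd]]].
    + assert (Hvs : dS v s d) by (apply dS_sym; apply dA_dS; auto).
      destruct (IH x c1 p Hc1 Hm Hl1 Hp Hpe s Hs) as [w [Hw Hd']].
      exists w. split. rewrite <- Hsplit. apply in_app_l; auto.
      replace (d * S k) with (d + d * k) by lia. eapply dist_le_trans; eauto.
    + assert (HUs : U s).
      { apply (path_U m q); auto. apply Hq. rewrite Hqe, Hend. auto. }
      assert (Hvs : dS v s d) by (apply dA_dS; auto).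
      assert (HU2 : U (path_end m c2)) by (rewrite Hend; auto).
      destruct (IH m c2 q Hc2 HU2 Hl2 Hq Hqe s Hs) as [w [Hw Hd']].
      exists w. split. rewrite <- Hsplit. apply in_app_r; auto.
      replace (d * S k) with (d + d * k) by lia. eapply dist_le_trans; eauto.
Qed.


Lemma in_prefix_end x p1 p2 : In (path_end x p1) (x :: p1 ++ p2).
Proof. apply in_app_l. apply in_end. Qed.

Lemma pow_ge n : n + 1 <= 2 ^ n.
Proof. induction n; simpl; lia. Qed.

Lemma lin_exp a b : exists k0, forall k, k0 <= k -> a * k + b <= 2 ^ k.
Proof.
  set (n := 2 * a + b + 1). exists (2 * n).
  assert (Hb : a * (2 * n) + b <= 2 ^ (2 * n)).
  { replace (2 * n) with (n + n) by lia. rewrite Nat.pow_add_r.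
    pose proof (pow_ge n). unfold n in *. nia. }
  assert (H0 : 1 <= n) by (unfold n; lia). clearbody n.
  intros k Hk. replace k with (2 * n + (k - 2 * n)) by lia.
  generalize (k - 2 * n). intros j. induction j as [|j IH].
  - rewrite Nat.add_0_r. auto.
  - replace (2 * n + S j) with (S (2 * n + j)) by lia. rewrite Nat.pow_succ_r'.
    assert (a <= 2 ^ (2 * n + j)).
    { pose proof (Nat.pow_le_mono_r 2 (2*n) (2*n+j) ltac:(lia) ltac:(lia)).
      assert (a <= a * (2 * n)) by nia.
      revert Hb H H1. generalize (2 ^ (2 * n)) (2 ^ (2 * n + j)) (a * (2 * n)). intros. lia. }
    rewrite Nat.mul_succ_r. generalize dependent (2 ^ (2 * n + j)). intros. lia.
Qed.

Lemma num_bound cc : exists C, forall D, (forall k, cc * D <= 2 ^ k -> D <= d * k + K) -> D <= C.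
Proof.
  destruct (lin_exp (cc * d) (cc * (d + K))) as [k0 Hk0].
  exists (d * k0 + K). intros D H.
  destruct (min_nat (fun k => cc * D <= 2 ^ k)) as [k [Hk Hmin]].
  { exists (cc * D). pose proof (pow_ge (cc * D)). lia. }
  pose proof (H k Hk) as HD.
  destruct (le_lt_dec k k0) as [Hle|Hlt].
  - nia.
  - destruct k as [|k']; [lia|].
    assert (Hn : ~ cc * D <= 2 ^ k') by (intros C; specialize (Hmin k' C); lia).
    specialize (Hk0 k' ltac:(lia)). nia.
Qed.

Lemma along_g x g w1 w2 n : geodesic ES x g -> In w1 (x :: g) -> In w2 (x :: g) -> dS w1 w2 n ->
  exists W, is_path ES w1 W /\ path_end w1 W = w2 /\ length W <= n /\
    forall u, In u (w1 :: W) -> In u (x :: g).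
Proof.
  intros Hg H1 H2 Hd.
  destruct (in_decomp x g w1 H1) as [a1 [a2 [Ha Hw1]]].
  destruct (in_decomp x g w2 H2) as [b1 [b2 [Hb Hw2]]].
  rewrite Ha in Hb. apply app_eq_app in Hb.
  destruct Hb as [l [[E1 E2]|[E1 E2]]].
  - (* a1 = b1 ++ l, b2 = l ++ a2 : w2 before w1 *)
    assert (Hg' : geodesic ES x (b1 ++ l ++ a2)) by (rewrite Ha, E1, <- app_assoc in Hg; auto).
    pose proof (geodesic_sub _ ES x b1 l a2 Hg') as Gl. rewrite Hw2 in Gl.
    assert (He : path_end w2 l = w1) by (rewrite <- Hw2, <- path_end_app, <- E1; exact Hw1).
    assert (Hl : length l <= n).
    { destruct (dS_sym _ _ _ Hd) as [k [Hk W]]. destruct Gl as [_ Gl]. rewrite He in Gl.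
      specialize (Gl k W). lia. }
    destruct (rev_path _ ES Hsym w2 l (proj1 Gl)) as [q [Hq [Hqp [Hqe Hqin]]]].
    rewrite He in Hqp, Hqin, Hqe. exists q. split; [auto|split; [auto|split; [lia|]]].
    intros u Hu. apply Hqin in Hu. rewrite <- Hw2 in Hu. rewrite Ha, E1, <- app_assoc.
    apply in_app_r. apply in_app_l. auto.
  -
    assert (Hg' : geodesic ES x (a1 ++ l ++ b2)) by (rewrite Ha, E2 in Hg; auto).
    pose proof (geodesic_sub _ ES x a1 l b2 Hg') as Gl. rewrite Hw1 in Gl.
    assert (He : path_end w1 l = w2) by (rewrite <- Hw1, <- path_end_app, <- E1; exact Hw2).
    exists l. split. apply Gl. split; auto. split.
    { destruct Hd as [k [Hk W]]. destruct Gl as [_ Gl]. rewrite He in Gl. specialize (Gl k W). lia. }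
    intros u Hu. rewrite Ha, E2. rewrite <- Hw1 in Hu. apply in_app_r. apply in_app_l. auto.
Qed.


Lemma walk_of_dist x y n : dS x y n -> exists W, is_path ES x W /\ path_end x W = y /\ length W <= n.
Proof. intros [k [Hk [p [Hl [Hp He]]]]]. exists p. subst; auto. Qed.

Lemma morse1 : exists Dm, forall x g r, U x -> geodesic ES x g -> geodesic EA x r ->
  path_end x r = path_end x g ->
  forall v, In v (x :: r) -> exists w, In w (x :: g) /\ dS v w Dm.
Proof.
  destruct (num_bound (K * (4 + 4 * K))) as [C HC].
  exists C. intros x g r Hx Hg Hr Hend.
  assert (HUy : U (path_end x g)) by (apply (path_US x g (proj1 Hg) Hx); apply in_end).
  assert (HUr : forall u, In u (x :: r) -> U u) by (apply path_U; [apply Hr|rewrite Hend; auto]).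
  assert (HUg : forall u, In u (x :: g) -> U u) by (apply path_US; [apply Hg|auto]).
  set (P := fun n => forall v, In v (x :: r) -> exists w, In w (x :: g) /\ dS v w n).
  destruct (min_nat P) as [D [HPD Hmin]].
  { exists (length r). intros v Hv. exists (path_end x g). split. apply in_end.
    rewrite <- Hend. apply dA_dS. apply suffix_dist; auto. apply Hr. rewrite Hend; auto. }
  intros v Hv. destruct (HPD v Hv) as [w [Hw Hd]]. exists w. split; auto.
  apply (dist_le_mono _ _ _ _ _ _ Hd). apply HC. intros k Hk.
  destruct D as [|D']; [lia|].
  destruct (classic (exists v0, In v0 (x :: r) /\ forall w, In w (x :: g) -> ~ dS v0 w D'))
    as [[v0 [Hv0 Hfar]]|Hno].
  2:{ exfalso. assert (P D') as HP'.
      { intros u Hu. apply NNPP. intros Hn. apply Hno. exists u. split; auto.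
        intros w' Hw' Hd'. apply Hn. exists w'. auto. }
      specialize (Hmin D' HP'). lia. }
  set (D := S D') in *.
  destruct (le_lt_dec D (d * k + K)) as [Hok|Hbad]; auto. exfalso.
  assert (HUv0 : U v0) by auto.
  set (m := 2 * K * D).
  destruct (in_decomp x r v0 Hv0) as [r1 [r2 [Hr12 Hv0e]]].
  set (r1a := firstn (length r1 - m) r1). set (r1b := skipn (length r1 - m) r1).
  set (r2a := firstn m r2). set (r2b := skipn m r2).
  assert (E1 : r1 = r1a ++ r1b) by (symmetry; apply firstn_skipn).
  assert (E2 : r2 = r2a ++ r2b) by (symmetry; apply firstn_skipn).
  set (y' := path_end x r1a). set (z' := path_end v0 r2a).
  assert (Hr' : r = r1a ++ (r1b ++ r2a) ++ r2b)
    by (rewrite Hr12, E1, E2; repeat rewrite <- app_assoc; auto).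
  assert (Hy'v0 : path_end y' r1b = v0) by (unfold y'; rewrite <- path_end_app, <- E1; auto).
  assert (Hseg : geodesic EA y' (r1b ++ r2a)).
  { unfold y'. apply (geodesic_sub _ EA x r1a _ r2b). rewrite <- Hr'; auto. }
  assert (Hsege : path_end y' (r1b ++ r2a) = z') by (rewrite path_end_app, Hy'v0; auto).
  assert (Hy'in : In y' (x :: r)) by (rewrite Hr'; apply in_prefix_end).
  assert (Hz'in : In z' (x :: r)).
  { rewrite Hr12, E2, app_assoc. unfold z'. rewrite <- Hv0e, <- path_end_app. apply in_prefix_end. }
  assert (HUy' : U y') by auto. assert (HUz' : U z') by auto.
  assert (HW1 : exists w1 W1, In w1 (x :: g) /\ is_path ES y' W1 /\ path_end y' W1 = w1 /\
     length W1 <= D /\ forall u, In u (y' :: W1) -> ~ dS v0 u D').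
  { destruct (le_lt_dec (length r1) m) as [Hs|Hs].
    - assert (Ea : r1a = []) by (unfold r1a; replace (length r1 - m) with 0 by lia; auto).
      assert (Hyx : y' = x) by (unfold y'; rewrite Ea; reflexivity).
      exists x, []. split. left; auto. split. simpl; auto. split. rewrite Hyx. reflexivity.
      split. simpl; lia. intros u [Hu|[]]. subst u. rewrite Hyx. apply Hfar. left; auto.
    - assert (Hlb : length r1b = m) by (unfold r1b; rewrite length_skipn; lia).
      destruct (HPD y' Hy'in) as [w1 [Hw1 Hd1]].
      destruct (walk_of_dist _ _ _ Hd1) as [W1 [HW [HWe HWl]]].
      exists w1, W1. split; auto. split; auto. split; auto. split; auto.
      intros u Hu Hdu.
      assert (Hdy : dS y' u D).
      { apply (dist_le_mono _ _ _ _ (length W1)); [apply prefix_dist|]; auto. }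
      assert (Hyv : dS y' v0 (D + D')).
      { eapply dist_le_trans; [exact Hdy| apply dS_sym; exact Hdu]. }
      destruct (dS_dA _ _ _ Hyv HUy') as [kk [Hkk W]].
      assert (G1 : geodesic EA x (r1a ++ r1b ++ r2)) by (rewrite app_assoc, <- E1, <- Hr12; auto).
      assert (length r1b <= kk).
      { apply (geodesic_lb _ EA x r1a r1b r2 kk G1). rewrite <- E1, Hv0e. exact W. }
      unfold m in *. nia. }
  assert (HW3 : exists w2 W3, In w2 (x :: g) /\ is_path ES w2 W3 /\ path_end w2 W3 = z' /\
     length W3 <= D /\ forall u, In u (w2 :: W3) -> ~ dS v0 u D').
  { destruct (le_lt_dec (length r2) m) as [Hs|Hs].
    - assert (Ea : r2a = r2) by (unfold r2a; apply firstn_all2; lia).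
      assert (Hz : z' = path_end x g) by (unfold z'; rewrite Ea, <- Hv0e, <- path_end_app, <- Hr12; auto).
      exists z', []. split. rewrite Hz. apply in_end. split. simpl; auto. split. reflexivity.
      split. simpl; lia. intros u [Hu|[]]. subst u. apply Hfar. rewrite Hz. apply in_end.
    - assert (Hla : length r2a = m) by (unfold r2a; rewrite firstn_length; lia).
      destruct (HPD z' Hz'in) as [w2 [Hw2 Hd2]].
      destruct (walk_of_dist _ _ _ Hd2) as [W [HW [HWe HWl]]].
      destruct (rev_path _ ES Hsym z' W HW) as [q [Hq [Hqp [Hqe Hqin]]]].
      rewrite HWe in Hqp, Hqin, Hqe.
      exists w2, q. split; auto. split; auto. split; auto. split. lia.
      intros u Hu Hdu. apply Hqin in Hu.
      assert (Hdz : dS u z' D).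
      { apply dS_sym. apply (dist_le_mono _ _ _ _ (length W)); [apply prefix_dist|]; auto. }
      assert (Hvz : dS v0 z' (D' + D)) by (eapply dist_le_trans; eauto).
      destruct (dS_dA _ _ _ Hvz HUv0) as [kk [Hkk W']].
      assert (G2 : geodesic EA x (r1 ++ r2a ++ r2b)) by (rewrite <- E2, <- Hr12; auto).
      assert (length r2a <= kk).
      { apply (geodesic_lb _ EA x r1 r2a r2b kk G2). rewrite path_end_app, Hv0e. exact W'. }
      unfold m in *. nia. }
  destruct HW1 as [w1 [W1 [Hw1 [HW1p [HW1e [HW1l HW1f]]]]]].
  destruct HW3 as [w2 [W3 [Hw2 [HW3p [HW3e [HW3l HW3f]]]]]].
  assert (Hsegl : length (r1b ++ r2a) <= 2 * m).
  { rewrite length_app. unfold r1b, r2a. rewrite length_skipn, firstn_length. lia. }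
  assert (Hyz : dS y' z' (length (r1b ++ r2a))).
  { rewrite <- Hsege. apply dA_dS. apply walk_dist. apply path_walk. apply Hseg. rewrite Hsege; auto. }
  assert (Hw12 : dS w1 w2 (D + length (r1b ++ r2a) + D)).
  { apply (dist_le_trans _ _ _ z'). apply (dist_le_trans _ _ _ y').
    - apply dS_sym. apply (dist_le_mono _ _ _ _ (length W1)); auto. rewrite <- HW1e.
      apply walk_dist. apply path_walk. auto.
    - auto.
    - apply dS_sym. apply (dist_le_mono _ _ _ _ (length W3)); auto. rewrite <- HW3e.
      apply walk_dist. apply path_walk. auto. }
  destruct (along_g x g w1 w2 _ Hg Hw1 Hw2 Hw12) as [W2 [HW2p [HW2e [HW2l HW2in]]]].
  set (W := W1 ++ W2 ++ W3).
  assert (HWp : is_path ES y' W).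
  { unfold W. apply is_path_app. split; auto. rewrite HW1e. apply is_path_app. split; auto.
    rewrite HW2e. auto. }
  assert (HWe : path_end y' W = z') by (unfold W; rewrite !path_end_app, HW1e, HW2e; auto).
  assert (HWl : length W <= 4 * D + 4 * K * D).
  { unfold W. rewrite !length_app. unfold m in *. lia. }
  assert (HWf : forall u, In u (y' :: W) -> ~ dS v0 u D').
  { intros u Hu. unfold W in Hu. apply in_app_split in Hu. destruct Hu as [Hu|Hu]; auto.
    rewrite HW1e in Hu. apply in_app_split in Hu. destruct Hu as [Hu|Hu].
    - apply Hfar. auto.
    - rewrite HW2e in Hu. auto. }
  destruct (expand y' W HWp HUy') as [c [Hc [Hce [Hcl Hcin]]]].
  assert (Hc2 : length c <= 2 ^ k) by nia.
  assert (HUc : U (path_end y' c)) by (rewrite Hce, HWe; auto).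
  assert (Hce' : path_end y' (r1b ++ r2a) = path_end y' c) by (rewrite Hsege, Hce, HWe; auto).
  assert (Hv0' : In v0 (y' :: r1b ++ r2a)) by (rewrite <- Hy'v0; apply in_prefix_end).
  destruct (log_lemma k y' c (r1b ++ r2a) Hc HUc Hc2 Hseg Hce' v0 Hv0') as [u [Hu Hdu]].
  destruct (Hcin u Hu) as [w' [Hw' Hdw']].
  apply (HWf w' Hw'). apply (dist_le_mono _ _ _ _ (d * k + K)).
  eapply dist_le_trans; [exact Hdu| apply dS_sym; exact Hdw']. lia.
Qed.


Lemma ivt x r (A B : V -> Prop) : is_path EA x r -> A x -> B (path_end x r) ->
  (forall v, In v (x :: r) -> A v \/ B v) ->
  exists a b, A a /\ B b /\ (a = b \/ EA a b) /\ In a (x :: r) /\ In b (x :: r).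
Proof.
  revert x. induction r as [|z r IH]; intros x Hp HA HB Hall.
  - exists x, x. split; auto. split. exact HB. split. left; auto. split; left; auto.
  - destruct Hp as [Hxz Hp]. rewrite path_end_cons in HB.
    destruct (Hall z (or_intror (or_introl eq_refl))) as [Hz|Hz].
    + destruct (IH z Hp Hz HB (fun v Hv => Hall v (or_intror Hv))) as [a [b [Ha [Hb [Hab [Ha' Hb']]]]]].
      exists a, b. repeat split; auto; right; auto.
    + exists x, z. split; auto. split; auto. split. right; auto. split. left; auto. right; left; auto.
Qed.

Lemma morse2 Dm x g r : U x -> geodesic ES x g -> geodesic EA x r -> path_end x r = path_end x g ->
  (forall v, In v (x :: r) -> exists w, In w (x :: g) /\ dS v w Dm) ->
  forall u, In u (x :: g) -> exists a, In a (x :: r) /\ dS u a (3 * Dm + 1).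
Proof.
  intros Hx Hg Hr Hend M1 u Hu.
  assert (HUr : forall u, In u (x :: r) -> U u).
  { apply path_U; [apply Hr|]. rewrite Hend. apply (path_US x g (proj1 Hg) Hx). apply in_end. }
  destruct (in_decomp x g u Hu) as [g1 [g2 [Hg12 Hue]]].
  set (A := fun v => exists w, In w (x :: g1) /\ dS v w Dm).
  set (B := fun v => exists w, In w (u :: g2) /\ dS v w Dm).
  assert (HA : A x) by (exists x; split; [left; auto|apply dist_le_refl]).
  assert (HB : B (path_end x r)).
  { exists (path_end x r). split; [|apply dist_le_refl]. rewrite Hend, Hg12, path_end_app, Hue. apply in_end. }
  assert (Hall : forall v, In v (x :: r) -> A v \/ B v).
  { intros v Hv. destruct (M1 v Hv) as [w [Hw Hd]]. rewrite Hg12 in Hw. apply in_app_split in Hw.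
    rewrite Hue in Hw. destruct Hw as [Hw|Hw]; [left|right]; exists w; auto. }
  destruct (ivt x r A B (proj1 Hr) HA HB Hall) as [a [b [[w1 [Hw1 Ha]] [[w2 [Hw2 Hb]] [Hab [Ha' Hb']]]]]].
  assert (Hab1 : dS a b 1).
  { destruct Hab as [->|Hab]. apply dist_le_refl. apply dist_le_edge.
    exact (proj1 (HAS a b Hab (HUr b Hb'))). }
  assert (Hw12 : dS w1 w2 (Dm + 1 + Dm)).
  { apply (dist_le_trans _ _ _ b). apply (dist_le_trans _ _ _ a). apply dS_sym; auto. auto. auto. }
  destruct (in_decomp x g1 w1 Hw1) as [a1 [a2 [Ha12 Hw1e]]].
  destruct (in_decomp u g2 w2 Hw2) as [b1 [b2 [Hb12 Hw2e]]].
  assert (Gg : geodesic ES x (a1 ++ (a2 ++ b1) ++ b2)).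
  { replace (a1 ++ (a2 ++ b1) ++ b2) with g; auto.
    rewrite Hg12, Ha12, Hb12. repeat rewrite <- app_assoc. auto. }
  destruct Hw12 as [kk [Hkk W]].
  assert (Hl : length (a2 ++ b1) <= kk).
  { apply (geodesic_lb _ ES x a1 (a2 ++ b1) b2 kk Gg).
    rewrite app_assoc, path_end_app, <- Ha12, Hue, Hw1e, Hw2e. exact W. }
  assert (Pa : is_path ES w1 a2).
  { pose proof (proj1 Hg) as P. rewrite Hg12, Ha12 in P. apply is_path_app in P. destruct P as [P _].
    apply is_path_app in P. rewrite <- Hw1e. tauto. }
  assert (Pae : path_end w1 a2 = u) by (rewrite <- Hw1e, <- path_end_app, <- Ha12; auto).
  assert (Hw1u : dS w1 u (length a2)) by (rewrite <- Pae; apply walk_dist; apply path_walk; auto).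
  exists a. split; auto.
  apply (dist_le_mono _ _ _ _ (length a2 + Dm)).
  eapply dist_le_trans. apply dS_sym; eauto. apply dS_sym; auto.
  rewrite length_app in *. lia.
Qed.

Lemma ball_out n x0 gA v : (forall u, In u (x0 :: gA) -> U u) -> U v ->
  in_out_ball EA n x0 gA v -> exists s, In s (x0 :: gA) /\ dS v s n.
Proof. intros HU Hv [s [Hs Hd]]. exists s. split; auto. apply dS_sym. apply dA_dS; auto. Qed.

Lemma ball_in n x0 gA v : (forall u, In u (x0 :: gA) -> U u) ->
  in_in_ball EA n x0 gA v -> exists s, In s (x0 :: gA) /\ dS v s n.
Proof. intros HU [s [Hs Hd]]. exists s. split; auto. apply dA_dS; auto. Qed.

Lemma near_out n x0 g v : (exists w, In w (x0 :: g) /\ dS v w n) -> in_out_ball ES n x0 g v.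
Proof. intros [w [Hw Hd]]. exists w. split; auto. apply dS_sym; auto. Qed.

Lemma near_in n x0 g v : (exists w, In w (x0 :: g) /\ dS v w n) -> in_in_ball ES n x0 g v.
Proof. intros [w [Hw Hd]]. exists w. split; auto. Qed.

Lemma chain Dm v a s w : dS v a (3 * Dm + 1) -> dS a s d -> dS s w Dm -> dS v w (4 * Dm + 1 + d).
Proof.
  intros H1 H2 H3. apply (dist_le_mono _ _ _ _ (3 * Dm + 1 + d + Dm)); [|lia].
  eapply dist_le_trans; [eapply dist_le_trans|]; eauto.
Qed.

Lemma A_geod x y n : dS x y n -> U x -> exists r, geodesic EA x r /\ path_end x r = y.
Proof. intros H Hx. destruct (dS_dA _ _ _ H Hx) as [k [_ W]]. exact (geodesic_exists _ _ _ _ _ W). Qed.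

Theorem core_thin : exists d', forall xp p xq q xr r, U xp ->
  geodesic_triangle ES xp p xq q xr r -> thin_triangle ES d' xp p xq q xr r.
Proof.
  destruct morse1 as [Dm HM].
  exists (4 * Dm + 1 + d). intros xp p xq q xr r Hx [Gp [Gq [Gr [Hpe [Hxr Hre]]]]].
  subst xr.
  assert (HUq : U xq) by (rewrite <- Hpe; apply (path_US xp p (proj1 Gp) Hx); apply in_end).
  set (z := path_end xq q) in *.
  assert (HUz : U z) by (apply (path_US xq q (proj1 Gq) HUq); apply in_end).
  destruct (A_geod xp xq (length p)) as [pA [GpA HpA]]; auto.
  { rewrite <- Hpe. apply walk_dist. apply path_walk. apply Gp. }
  destruct (A_geod xq z (length q)) as [qA [GqA HqA]]; auto.
  { apply walk_dist. apply path_walk. apply Gq. }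
  destruct (A_geod xp z (length r)) as [rA [GrA HrA]]; auto.
  { rewrite <- Hre. apply walk_dist. apply path_walk. apply Gr. }
  assert (M1p := HM xp p pA Hx Gp GpA ltac:(rewrite HpA, Hpe; auto)).
  assert (M1q := HM xq q qA HUq Gq GqA ltac:(rewrite HqA; auto)).
  assert (M1r := HM xp r rA Hx Gr GrA ltac:(rewrite HrA, Hre; auto)).
  assert (M2p := morse2 Dm xp p pA Hx Gp GpA ltac:(rewrite HpA, Hpe; auto) M1p).
  assert (M2q := morse2 Dm xq q qA HUq Gq GqA ltac:(rewrite HqA; auto) M1q).
  assert (M2r := morse2 Dm xp r rA Hx Gr GrA ltac:(rewrite HrA, Hre; auto) M1r).
  assert (UpA : forall u, In u (xp :: pA) -> U u) by (apply path_U; [apply GpA|rewrite HpA; auto]).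
  assert (UqA : forall u, In u (xq :: qA) -> U u) by (apply path_U; [apply GqA|rewrite HqA; auto]).
  assert (UrA : forall u, In u (xp :: rA) -> U u) by (apply path_U; [apply GrA|rewrite HrA; auto]).
  assert (Htri : geodesic_triangle EA xp pA xq qA xp rA).
  { unfold geodesic_triangle. repeat split; try apply GpA; try apply GqA; try apply GrA; auto.
    rewrite HrA, HqA. auto. }
  destruct (Hthin _ _ _ _ _ _ Htri) as [T1 [T2 T3]].
  split; [|split].
  - intros v Hv. destruct (M2r v Hv) as [a [Ha Hva]].
    destruct (T1 a Ha) as [Hb|Hb].
    + destruct (ball_out _ _ _ _ UpA (UrA a Ha) Hb) as [s [Hs Has]].
      destruct (M1p s Hs) as [w [Hw Hsw]]. left. apply near_out. exists w. split; auto. eapply chain; eauto.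
    + destruct (ball_in _ _ _ _ UqA Hb) as [s [Hs Has]].
      destruct (M1q s Hs) as [w [Hw Hsw]]. right. apply near_in. exists w. split; auto. eapply chain; eauto.
  - intros v Hv. destruct (M2p v Hv) as [a [Ha Hva]].
    destruct (T2 a Ha) as [Hb|Hb].
    + destruct (ball_out _ _ _ _ UrA (UpA a Ha) Hb) as [s [Hs Has]].
      destruct (M1r s Hs) as [w [Hw Hsw]]. left. apply near_out. exists w. split; auto. eapply chain; eauto.
    + destruct (ball_in _ _ _ _ UqA Hb) as [s [Hs Has]].
      destruct (M1q s Hs) as [w [Hw Hsw]]. right. apply near_in. exists w. split; auto. eapply chain; eauto.
  - intros v Hv. destruct (M2q v Hv) as [a [Ha Hva]].
    destruct (T3 a Ha) as [Hb|Hb].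
    + destruct (ball_out _ _ _ _ UpA (UqA a Ha) Hb) as [s [Hs Has]].
      destruct (M1p s Hs) as [w [Hw Hsw]]. left. apply near_out. exists w. split; auto. eapply chain; eauto.
    + destruct (ball_in _ _ _ _ UrA Hb) as [s [Hs Has]].
      destruct (M1r s Hs) as [w [Hw Hsw]]. right. apply near_in. exists w. split; auto. eapply chain; eauto.
Qed.

End Core.

From Stdlib Require Import ProofIrrelevance.

Section Transport.
Variables (V : Type) (U : V -> Prop) (ES : V -> V -> Prop).
Hypothesis HUS : forall x y, ES x y -> U x -> U y.
Definition EW (a b : {x | U x}) : Prop := ES (proj1_sig a) (proj1_sig b).
Implicit Types (a b : {x | U x}) (p : list {x | U x}).

Lemma sig_eq a b : proj1_sig a = proj1_sig b -> a = b.
Proof. destruct a as [x Hx], b as [y Hy]. simpl. intros ->. f_equal. apply proof_irrelevance. Qed.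

Lemma path_map a p : is_path EW a p <-> is_path ES (proj1_sig a) (map (@proj1_sig _ _) p).
Proof.
  revert a. induction p as [|b p IH]; intros a; simpl. tauto. rewrite IH. unfold EW. tauto.
Qed.

Lemma pe_map a p : proj1_sig (path_end a p) = path_end (proj1_sig a) (map (@proj1_sig _ _) p).
Proof.
  revert a. induction p as [|b p IH]; intros a. reflexivity.
  simpl map. rewrite !path_end_cons. apply IH.
Qed.

Lemma lift l : forall x a, proj1_sig a = x -> is_path ES x l ->
  exists p, map (@proj1_sig _ _) p = l /\ is_path EW a p.
Proof.
  induction l as [|y l IH]; intros x a Ha Hp.
  - exists []. simpl. auto.
  - destruct Hp as [Hxy Hp]. subst x.
    set (b := exist U y (HUS _ _ Hxy (proj2_sig a))).
    destruct (IH y b eq_refl Hp) as [p [Hm Hp']].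
    exists (b :: p). simpl. rewrite Hm. split; auto.
Qed.

Lemma walk_lift a b n : walk ES (proj1_sig a) (proj1_sig b) n -> walk EW a b n.
Proof.
  intros [l [Hl [Hp He]]]. destruct (lift l _ a eq_refl Hp) as [p [Hm Hp']].
  exists p. split. rewrite <- Hl, <- Hm, length_map; auto. split; auto.
  apply sig_eq. rewrite pe_map, Hm. auto.
Qed.

Lemma walk_down a b n : walk EW a b n -> walk ES (proj1_sig a) (proj1_sig b) n.
Proof.
  intros [p [Hl [Hp He]]]. exists (map (@proj1_sig _ _) p). rewrite length_map.
  split; auto. split. apply path_map; auto. rewrite <- pe_map, He. auto.
Qed.

Lemma dist_lift a b n : dist_le ES (proj1_sig a) (proj1_sig b) n -> dist_le EW a b n.
Proof. intros [k [Hk W]]. exists k. split; auto. apply walk_lift; auto. Qed.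

Lemma geod_down a p : geodesic EW a p -> geodesic ES (proj1_sig a) (map (@proj1_sig _ _) p).
Proof.
  intros [Hp Hg]. split. apply path_map; auto. intros n W. rewrite length_map.
  apply Hg. apply walk_lift. rewrite pe_map. auto.
Qed.

Lemma in_down a p u : In u (a :: p) -> In (proj1_sig u) (proj1_sig a :: map (@proj1_sig _ _) p).
Proof. intros H. apply (in_map (@proj1_sig _ _)) in H. exact H. Qed.

Lemma in_up a p v : In v (proj1_sig a :: map (@proj1_sig _ _) p) -> exists u, proj1_sig u = v /\ In u (a :: p).
Proof. intros H. change (In v (map (@proj1_sig _ _) (a :: p))) in H. apply in_map_iff in H. auto. Qed.

Lemma out_up d a p v : in_out_ball ES d (proj1_sig a) (map (@proj1_sig _ _) p) (proj1_sig v) ->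
  in_out_ball EW d a p v.
Proof.
  intros [s [Hs Hd]]. destruct (in_up a p s Hs) as [u [<- Hu]]. exists u. split; auto.
  apply dist_lift; auto.
Qed.

Lemma in_ball_up d a p v : in_in_ball ES d (proj1_sig a) (map (@proj1_sig _ _) p) (proj1_sig v) ->
  in_in_ball EW d a p v.
Proof.
  intros [s [Hs Hd]]. destruct (in_up a p s Hs) as [u [<- Hu]]. exists u. split; auto.
  apply dist_lift; auto.
Qed.

Lemma transport_thin d' :
  (forall v1 l1 v2 l2 v3 l3, U v1 -> geodesic_triangle ES v1 l1 v2 l2 v3 l3 -> thin_triangle ES d' v1 l1 v2 l2 v3 l3) ->
  strongly_hyperbolic_graph_delta EW d'.
Proof.
  intros H xp p xq q xr r [Gp [Gq [Gr [Hpe [Hxr Hre]]]]].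
  set (f := map (@proj1_sig V U)).
  assert (Ht : geodesic_triangle ES (proj1_sig xp) (f p) (proj1_sig xq) (f q) (proj1_sig xr) (f r)).
  { unfold geodesic_triangle, f. split. apply geod_down; auto. split. apply geod_down; auto.
    split. apply geod_down; auto. split. rewrite <- pe_map, Hpe; auto. split. rewrite Hxr; auto.
    rewrite <- !pe_map, Hre. auto. }
  destruct (H _ _ _ _ _ _ (proj2_sig xp) Ht) as [T1 [T2 T3]].
  split; [|split]; intros v Hv; [destruct (T1 _ (in_down _ _ _ Hv)) as [Hb|Hb]
    |destruct (T2 _ (in_down _ _ _ Hv)) as [Hb|Hb]|destruct (T3 _ (in_down _ _ _ Hv)) as [Hb|Hb]];
    (left; apply out_up; exact Hb) || (right; apply in_ball_up; exact Hb).
Qed.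

End Transport.

Section Monoid.
Variables (M : Type) (mul : M -> M -> M) (one : M).
Hypothesis Hmon : is_monoid mul one.
Hypothesis Hcan : cancellative mul.
Notation U := (is_unit mul one).

Lemma massoc x y z : mul x (mul y z) = mul (mul x y) z.
Proof. apply Hmon. Qed.
Lemma mlid x : mul one x = x.
Proof. apply Hmon. Qed.
Lemma mrid x : mul x one = x.
Proof. apply Hmon. Qed.

Lemma rinv_unit x y : mul x y = one -> U x /\ U y.
Proof.
  intros H. assert (H' : mul y x = one).
  { apply (proj1 Hcan x). rewrite massoc, H, mlid, mrid. auto. }
  split; [exists y|exists x]; auto.
Qed.

Lemma unit_mul_inv a b : U (mul a b) -> U a /\ U b.
Proof.
  intros [w [H1 H2]]. split.
  - apply (rinv_unit a (mul b w)). rewrite massoc. auto.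
  - apply (rinv_unit (mul w a) b). rewrite <- massoc. auto.
Qed.

Lemma unit_mul a b : U a -> U b -> U (mul a b).
Proof.
  intros [a' [Ha1 Ha2]] [b' [Hb1 Hb2]]. exists (mul b' a'). split.
  - rewrite <- massoc, (massoc b b' a'), Hb1, mlid. auto.
  - rewrite <- massoc, (massoc a' a b), Ha2, mlid. auto.
Qed.

Lemma word_units l : U (word_prod mul one l) -> forall a, In a l -> U a.
Proof.
  induction l as [|b l IH]; simpl; intros H a Ha. destruct Ha.
  apply unit_mul_inv in H. destruct Ha as [->|Ha]; [tauto|]. apply IH; tauto.
Qed.

Fixpoint pathof (x : M) (w : list M) : list M :=
  match w with [] => [] | a :: w' => mul x a :: pathof (mul x a) w' end.

Lemma pathof_props (A : list M) x w : (forall b, In b w -> In b A) ->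
  is_path (cayley_edge mul A) x (pathof x w) /\ path_end x (pathof x w) = mul x (word_prod mul one w) /\
  length (pathof x w) = length w.
Proof.
  revert x. induction w as [|a w IH]; intros x Hw; simpl.
  - split; auto. split; auto. rewrite mrid. reflexivity.
  - destruct (IH (mul x a) (fun b Hb => Hw b (or_intror Hb))) as [H1 [H2 H3]].
    split. split; auto. exists a. split; auto. apply Hw; left; auto.
    split. rewrite path_end_cons, H2, massoc. auto. auto.
Qed.

Lemma build_S (A : list M) : generates mul one A -> forall A0, (forall a, In a A0 -> In a A) ->
  exists S K, (forall s, In s S -> U s) /\
    (forall s, In s S -> exists t, In t S /\ mul s t = one /\ mul t s = one) /\
    (forall a, In a A0 -> U a -> In a S) /\
    (forall s, In s S -> exists w, (forall b, In b w -> In b A) /\ length w <= K /\ word_prod mul one w = s).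
Proof.
  intros Hgen. induction A0 as [|a A0 IH]; intros HA.
  - exists [], 0. simpl. repeat split; intros; tauto.
  - destruct (IH (fun b Hb => HA b (or_intror Hb))) as [S [K [H1 [H2 [H3 H4]]]]].
    destruct (classic (U a)) as [Ha|Ha].
    + destruct Ha as [b [Hab Hba]].
      destruct (Hgen b) as [wb [Hwb Hbw]].
      exists (a :: b :: S), (Nat.max (Nat.max 1 (length wb)) K).
      split; [|split; [|split]].
      * intros s [<-|[<-|Hs]]. exists b; auto. exists a; auto. auto.
      * intros s [<-|[<-|Hs]]. exists b. simpl; auto. exists a. simpl; auto.
        destruct (H2 s Hs) as [t [Ht Hst]]. exists t. simpl; auto.
      * intros a' [<-|Ha'] Hu. simpl; auto. simpl; right; right; auto.
      * intros s [<-|[<-|Hs]].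
        -- exists [a]. split. intros c [<-|[]]. apply HA; left; auto. split. simpl. apply (Nat.le_trans _ (Nat.max 1 (length wb))); apply Nat.le_max_l.
           simpl. apply mrid.
        -- exists wb. split; auto. split. apply (Nat.le_trans _ (Nat.max 1 (length wb))). apply Nat.le_max_r. apply Nat.le_max_l. auto.
        -- destruct (H4 s Hs) as [w [Hw1 [Hw2 Hw3]]]. exists w. split; auto. split; auto. apply (Nat.le_trans _ K); auto. apply Nat.le_max_r.
    + exists S, K. split; auto. split; auto. split; auto.
      intros a' [<-|Ha'] Hu. contradiction. auto.
Qed.

Theorem monoid_main : strongly_hyperbolic_monoid mul one -> units_word_hyperbolic mul one.
Proof.
  intros [A [Hgen [d Hthin]]].
  destruct (build_S A Hgen A (fun a H => H)) as [S [K [HSu [HSinv [HSA HSw]]]]].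
  set (ES := fun x y => exists s, In s S /\ mul x s = y).
  set (EA := cayley_edge mul A).
  assert (HAS : forall x y, EA x y -> U y -> ES x y /\ U x).
  { intros x y [a [Ha Hxa]] Hy. subst y. apply unit_mul_inv in Hy. destruct Hy as [Hx Hau].
    split; auto. exists a. split; auto. }
  assert (HUS : forall x y, ES x y -> U x -> U y).
  { intros x y [s [Hs <-]] Hx. apply unit_mul; auto. }
  assert (Hsym : forall x y, ES x y -> ES y x).
  { intros x y [s [Hs <-]]. destruct (HSinv s Hs) as [t [Ht [Hst _]]]. exists t. split; auto.
    rewrite <- massoc, Hst, mrid. auto. }
  assert (Hexp : forall x y, ES x y -> U x -> exists c, is_path EA x c /\ path_end x c = y /\
    length c <= K + 1 /\ forall u, In u (x :: c) -> dist_le ES x u (K + 1)).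
  { intros x y [s [Hs <-]] Hx. destruct (HSw s Hs) as [w [Hw1 [Hw2 Hw3]]].
    destruct (pathof_props A x w Hw1) as [P1 [P2 P3]].
    exists (pathof x w). split; auto. split. rewrite P2, Hw3; auto. split. lia.
    intros u Hu. apply (dist_le_mono _ _ _ _ (length (pathof x w))); [|lia].
    apply (dA_dS M EA ES U HAS). apply prefix_dist; auto.
    apply (path_U M EA ES U HAS x (pathof x w)); auto. rewrite P2, Hw3. apply unit_mul; auto. }
  destruct (core_thin M EA ES U d (K + 1) Hthin HAS HUS Hsym ltac:(lia) Hexp) as [d' Hd'].
  exists S. split; auto. split; auto. split.
  - intros [u Hu]. simpl. destruct (Hgen u) as [l [Hl Hul]]. exists l. split; auto.
    intros a Ha. apply HSA. auto. subst u. apply (word_units l Hu a Ha).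
  - exists d'. apply (transport_thin M U ES HUS d' Hd').
Qed.

End Monoid.

Theorem corollary4p10 (M : Type) (mul : M -> M -> M) (one : M) :
  is_monoid mul one ->
  cancellative mul ->
  strongly_hyperbolic_monoid mul one ->
  units_word_hyperbolic mul one.
Proof.
  intros Hmon Hcan H. exact (monoid_main M mul one Hmon Hcan H).
Qed.
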